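(* Let $\mu\ge 2$ and $D\ge 1$ be integers, and let $(V,T)$ be the deterministic rooted tree of depth $D$ with root $v_o$ in which every node at depth less than $D$ has exactly $\mu$ children; let $L$ be its set of $\mu^D$ leaves and $V_d$ the set of nodes at depth $d$. Every leaf carries the same mark $F_x=\nu>0$, and $F_v:=\sum_{x\in L(v)}F_x$ for $v\in V$, where $L(v)$ is the set of leaves descended from $v$. Labels $\chi$ on $V$ are generated as follows: given $\rho_1,\dots,\rho_D\in[0,1]$, let $\{Z_u,u\ne v_o\}$ be independent Bernoulli variables with $\mathbf{E}[Z_u]=\rho_d$ for $u\in V_d$; the root gets label $0$; in order of increasing depth, a node with $Z_u=0$ copies its parent's label and a node with $Z_u=1$ gets a brand new label. Independently, each leaf $x$ is declared wild with probability $\omega\in[0,1]$ (independently over leaves), and tame otherwise. Let $(q_1,\dots,q_D)$ be a probability distribution on $\{1,\dots,D\}$. Edges are generated as follows: let $N$ be a nonnegative integer random variable with $\mathbf{E}[N]=\nu\mu^D/2$, independent of everything else. For each of $N$ independent attempts: draw a height $s\in\{1,\dots,D\}$ with probability $q_s$; choose a node $v\in V_{D-s}$ with probability $F_v/F_{v_o}$; run two independent random walks from $v$, each of which, at a non-leaf node $u$, moves to a child $u'$ with probability $F_{u'}/F_u$, until absorbed at leaves $x$ and $y$. The attempt produces an agreement multi-edge if $x\neq y$ and $\chi(x)=\chi(y)$, and a conflict multi-edge if $\chi(x)\ne\chi(y)$ and at least one of $x,y$ is wild. For $t=0,\dots,D-1$ put $A_t:=\prod_{d=D-t}^{D}(1-\rho_d)^2$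 and $C_t:=(1-A_t)\,\omega(2-\omega)$. Then the expected number $M_A$ of agreement multi-edges and the expected number $M_C$ of conflict multi-edges are exactly \[ M_A=\frac{\nu\mu^D(\mu-1)}{2}\sum_{s=1}^{D}q_s\mu^{-s}\sum_{t=0}^{s-1}A_t\mu^t,\qquad M_C=\frac{\nu\mu^D(\mu-1)}{2}\sum_{s=1}^{D}q_s\mu^{-s}\sum_{t=0}^{s-1}C_t\mu^t. \]
   Context: Depth is distance from the root; the height of a node at depth $d$ is $D-d$. All random ingredients (tree labels, wildness, $N$, heights, start nodes, walks) are independent of one another except as specified. *)

(* Defs.v *)
From HB Require Import structures.
From mathcomp Require Import all_boot all_order all_algebra.
From mathcomp Require Import all_classical all_reals all_analysis.
Set Implicit Arguments. Unset Strict Implicit. Unset Printing Implicit Defensive.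
Import Order.TTheory GRing.Theory Num.Theory.
Local Open Scope ring_scope.

(* A leaf is a word x : 'I_D -> 'I_mu (its path from the root).
   A node at depth d (0 <= d <= D) is encoded by a "key": the function
   i |-> Some (x i) for i < d and None for i >= d, where x is any leaf below it.
   anc d x is the ancestor of leaf x at depth d; anc 0 x is the root. *)
Section Model.
Variables (mu D : nat).

Definition leaf := {ffun 'I_D -> 'I_mu}.
Definition key := {ffun 'I_D -> option 'I_mu}.

Definition anc (d : nat) (x : leaf) : key :=
  [ffun i : 'I_D => if (i < d)%N then Some (x i) else None].

Definition root_key : key := [ffun _ => None].

Definition key_depth (k : key) : nat := #|[pred i | k i != None]|.

Definition is_nonroot_node (k : key) : bool :=
  [exists d : 'I_D, exists x : leaf, k == anc d.+1 x].
Definition nonroot := {k : key | is_nonroot_node k}.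

Variable R : realType.
Variables (nu : R) (rho : nat -> R) (omega : R) (q : nat -> R).

(* F_v = sum of the marks F_x = nu over leaves x descended from v,
   for v given as a key at depth d (zero if the key is not a node of depth d) *)
Definition F (d : nat) (v : key) : R := \sum_(x : leaf | anc d x == v) nu.

(* probability that the random walk started at node v (at depth d)
   is absorbed at leaf x: product of the step probabilities F_{u'}/F_u *)
Definition walk (d : nat) (v : key) (x : leaf) : R :=
  if anc d x == v then \prod_(d <= j < D) (F j.+1 (anc j.+1 x) / F j (anc j x))
  else 0.

(* one attempt: (s-1, v, x, y) with height s = s-1 + 1 in {1..D},
   start node v in V_{D-s}, endpoints x, y of the two walks *)
Definition attempt := ('I_D * key * leaf * leaf)%type.

Definition att_weight (a : attempt) : R :=
  let: (s, v, x, y) := a in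
  let h := s.+1 in
  q h * (F (D - h) v / F 0 root_key) * walk (D - h) v x * walk (D - h) v y.

Definition Zlab := {ffun nonroot -> bool}.
Definition Zk (Z : Zlab) (k : key) : bool :=
  match (insub k : option nonroot) with Some u => Z u | None => false end.

(* labels: the root gets label root_key ("0"); going down, a node with Z=0
   copies the parent's label, a node with Z=1 gets the new label "itself"
   (its key, which no other node carries). chi_d Z d x = label of anc d x. *)
Fixpoint chi_d (Z : Zlab) (d : nat) (x : leaf) : key :=
  match d with
  | 0 => root_key
  | d'.+1 => if Zk Z (anc d'.+1 x) then anc d'.+1 x else chi_d Z d' x
  end.
Definition chi (Z : Zlab) (x : leaf) : key := chi_d Z D x.

Definition Wild := {ffun leaf -> bool}.

Definition PZ (Z : Zlab) : R :=
  \prod_(u : nonroot)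
     (if Z u then rho (key_depth (val u)) else 1 - rho (key_depth (val u))).
Definition PW (W : Wild) : R :=
  \prod_(x : leaf) (if W x then omega else 1 - omega).

Definition agreement (Z : Zlab) (W : Wild) (a : attempt) : bool :=
  let: (_, _, x, y) := a in (x != y) && (chi Z x == chi Z y).
Definition conflict (Z : Zlab) (W : Wild) (a : attempt) : bool :=
  let: (_, _, x, y) := a in (chi Z x != chi Z y) && (W x || W y).

(* expected number of attempts of kind E among n independent attempts
   (labels and wildness drawn independently of the attempts) *)
Definition expected_count (E : Zlab -> Wild -> attempt -> bool) (n : nat) : R :=
  \sum_(Z : Zlab) \sum_(W : Wild) \sum_(a : n.-tuple attempt)
     PZ Z * PW W * (\prod_(i < n) att_weight (tnth a i)) * (count (E Z W) a)%:R.

End Model.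

(* Main.v *)
Require Import Defs.
From HB Require Import structures.
From mathcomp Require Import all_boot all_order all_algebra.
From mathcomp Require Import all_classical all_reals all_analysis.
From mathcomp Require Import ring zify.
Import Order.TTheory GRing.Theory Num.Theory.
Import numFieldNormedType.Exports.
Local Open Scope classical_set_scope.
Local Open Scope ring_scope.
Section Gen.
Variable R : realType.

Lemma prod_bern (T : finType) (p : T -> R) (s : seq T) : uniq s ->
  \sum_(f : {ffun T -> bool})
     (\prod_t (if f t then p t else 1 - p t)) * \prod_(t <- s) (~~ f t)%:R
  = \prod_(t <- s) (1 - p t).
Proof.
move=> us; rewrite [RHS]big_uniq // [RHS]big_mkcond /=.
have E f : \prod_(t <- s) (~~ f t)%:R = \prod_t (if t \in s then (~~ f t)%:R else 1) :> R.
  by rewrite big_uniq // big_mkcond.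
under eq_bigr => f _ do rewrite E -big_split /=.
rewrite -(bigA_distr_bigA (fun t (b : bool) => (if b then p t else 1 - p t) * (if t \in s then (~~ b)%:R else 1))) /=.
apply: eq_bigr => t _.
rewrite big_bool /=; case: (t \in s) => /=; rewrite ?mulr1 ?mulr0 ?add0r //.
by rewrite addrC subrK.
Qed.

Lemma count_tnth (T : eqType) n (t : n.-tuple T) (P : pred T) :
  (count P t)%:R = \sum_(i < n) (P (tnth t i))%:R :> R.
Proof.
rewrite -sum1_count big_tuple natr_sum big_mkcond /=.
by apply: eq_bigr => i _; case: (P _).
Qed.

Lemma tuple_count (T : finType) (w : T -> R) (P : pred T) n :
  \sum_x w x = 1 ->
  \sum_(t : n.-tuple T) (\prod_(i < n) w (tnth t i)) * (count P t)%:R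
  = n%:R * \sum_x w x * (P x)%:R.
Proof.
move=> w1.
pose h (f : {ffun 'I_n -> T}) : n.-tuple T := [tuple f i | i < n].
pose g (t : n.-tuple T) : {ffun 'I_n -> T} := [ffun i => tnth t i].
have hK : cancel g h.
  by move=> t; apply: eq_from_tnth => i; rewrite tnth_mktuple ffunE.
have gK : cancel h g.
  by move=> f; apply/ffunP => i; rewrite ffunE tnth_mktuple.
rewrite (reindex h); last by exists g => x _; [apply: gK | apply: hK].
under eq_bigr => f _ do rewrite count_tnth mulr_sumr.
rewrite exchange_big /= mulr_natl -[X in _ *+ X]card_ord -sumr_const.
apply: eq_bigr => i _.
have -> : \sum_(f : {ffun 'I_n -> T}) \prod_(i0 < n) w (tnth (h f) i0) * (P (tnth (h f) i))%:R
   = \sum_(f : {ffun 'I_n -> T}) \prod_(j < n) (if j == i then w (f j) * (P (f j))%:R else w (f j)).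
  apply: eq_bigr => f _; rewrite (bigD1 i) //= [RHS](bigD1 i) //= eqxx tnth_mktuple.
  rewrite mulrAC; congr (_ * _); apply: eq_bigr => j /negbTE ->.
  by rewrite tnth_mktuple.
rewrite -(bigA_distr_bigA (fun j x => if j == i then w x * (P x)%:R else w x)) /=.
rewrite (bigD1 i) //= eqxx [X in _ * X]big1 ?mulr1 // => j /negbTE ->.
by rewrite w1.
Qed.

End Gen.

Section Tree.
Variables (mu D : nat).
Local Notation leaf := (leaf mu D).
Local Notation key := (key mu D).

Lemma ancE d (x : leaf) i : anc d x i = if (i < d)%N then Some (x i) else None.
Proof. by rewrite ffunE. Qed.

Lemma anc_eqP d (x y : leaf) :
  reflect (forall i : 'I_D, (i < d)%N -> x i = y i) (anc d x == anc d y).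
Proof.
apply: (iffP eqP) => [e i lt|h].
  by move: (congr1 (fun f : key => f i) e); rewrite !ancE lt => -[].
by apply/ffunP => i; rewrite !ancE; case: ifP => // /h ->.
Qed.

Lemma anc_inj d e (x y : leaf) : (d <= D)%N -> (e <= D)%N -> anc d x = anc e y -> d = e.
Proof.
wlog: d e x y / (d <= e)%N => [W dD eD E|].
  case: (leqP d e) => h; first exact: W h dD eD E.
  by apply/esym/(W e d y x) => //; apply: ltnW.
rewrite leq_eqVlt => /orP[/eqP //|lt] _ eD E.
have dD : (d < D)%N by apply: leq_trans lt eD.
move: (congr1 (fun f : key => f (Ordinal dD)) E); rewrite !ancE /= ltnn lt.
by [].
Qed.

Lemma anc_root (x : leaf) : anc 0 x = root_key mu D.
Proof. by apply/ffunP => i; rewrite ancE /root_key. Qed.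

Lemma anc_D (x y : leaf) : (anc D x == anc D y) = (x == y).
Proof.
apply/anc_eqP/eqP => [h|->//]; apply/ffunP => i; exact: h.
Qed.

Definition mxy (x y : leaf) : nat := \max_(j < D.+1 | anc j x == anc j y) j.

Lemma mxy_le x y : (mxy x y <= D)%N.
Proof. by apply/bigmax_leqP => i _; rewrite -ltnS. Qed.

Lemma anc_eq_mxy x y j : (j <= D)%N -> (anc j x == anc j y) = (j <= mxy x y)%N.
Proof.
move=> jD; apply/idP/idP => [h|le].
  by have := @leq_bigmax_cond _ (fun j : 'I_D.+1 => anc j x == anc j y) (fun j : 'I_D.+1 => nat_of_ord j) (Ordinal (jD : (j < D.+1)%N)) h.
apply/anc_eqP => i lt; apply/eqP/negPn/negP => ne.
have : (mxy x y <= i)%N.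
  apply/bigmax_leqP => k /anc_eqP h; rewrite leqNgt; apply/negP => ik.
  by move/eqP: ne; apply; apply: h.
by move=> /(leq_trans le); rewrite leqNgt lt.
Qed.

Lemma mxy_ltD x y : (mxy x y < D)%N = (x != y).
Proof. by rewrite -anc_D anc_eq_mxy // ltnNge. Qed.

Lemma card_ltj j : (j <= D)%N -> #|[pred i : 'I_D | (i < j)%N]| = j.
Proof.
move=> jD; rewrite -sum1_card -(big_mkord (fun i => (i < j)%N) (fun _ => 1%N)).
rewrite (_ : \sum_(0 <= i < D | (i < j)%N) 1%N = \sum_(0 <= i < j) 1%N).
  by rewrite sum_nat_const_nat muln1 subn0.
by rewrite (big_nat_widen 0 j D xpredT (fun _ => 1%N)).
Qed.

Lemma key_depth_anc j (x : leaf) : (j <= D)%N -> key_depth (anc j x) = j.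
Proof.
move=> jD; rewrite /key_depth -[RHS](@card_ltj j jD); apply: eq_card => i /=.
by rewrite !inE ancE; case: ifP.
Qed.

Lemma card_anc j (x : leaf) : (j <= D)%N ->
  #|[pred y : leaf | anc j y == anc j x]| = (mu ^ (D - j))%N.
Proof.
move=> jD.
pose Fm := fun i : 'I_D => if (i < j)%N then pred1 (x i) else predT.
have -> : #|[pred y : leaf | anc j y == anc j x]| = #|family Fm|.
  apply: eq_card => y; rewrite !inE; apply/anc_eqP/familyP => [h i|h i lt].
    by rewrite /Fm; case: ifP => // lt; have := h i lt; rewrite inE => ->.
  by have := h i; rewrite /Fm lt inE => /eqP.
rewrite card_family foldrE big_map big_enum /=.
rewrite (eq_bigr (fun i : 'I_D => if (i < j)%N then 1%N else mu)); last first.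
  by move=> i _; rewrite /Fm; case: ifP => _; rewrite ?card1 ?card_ord.
rewrite -(big_mkord xpredT (fun i => if (i < j)%N then 1%N else mu)).
rewrite (@big_cat_nat _ _ _ j) //= big_nat_cond big1; last first.
  by move=> i /andP[/andP[_ ->]].
rewrite mul1n big_nat_cond (eq_bigr (fun _ => mu)); last first.
  by move=> i /andP[/andP[]]; rewrite leqNgt => /negbTE ->.
by rewrite -big_nat_cond prod_nat_const_nat.
Qed.

Lemma is_nonroot_anc e (x : leaf) : (0 < e <= D)%N -> is_nonroot_node (anc e x).
Proof.
case: e => // e /andP[_ eD]; apply/existsP; exists (Ordinal eD).
by apply/existsP; exists x.
Qed.

End Tree.
Arguments ancE {mu D}. Arguments anc_eqP {mu D}. Arguments anc_inj {mu D}.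
Arguments anc_root {mu D}. Arguments anc_D {mu D}. Arguments mxy {mu D}.
Arguments mxy_le {mu D}. Arguments anc_eq_mxy {mu D}. Arguments mxy_ltD {mu D}.
Arguments key_depth_anc {mu D}. Arguments card_anc {mu D}. Arguments is_nonroot_anc {mu D}.
Arguments card_ltj {D}.

Section Chi.
Variables (mu D : nat).
Local Notation leaf := (leaf mu D).
Local Notation key := (key mu D).

Fixpoint cd (Z : Zlab mu D) (d : nat) (x : leaf) : nat :=
  match d with
  | 0 => 0
  | d'.+1 => if Zk Z (anc d'.+1 x) then d'.+1 else cd Z d' x
  end.

Lemma chi_dE Z d x : chi_d Z d x = anc (cd Z d x) x.
Proof. elim: d => [|d IH] /=; first by rewrite anc_root. by case: ifP. Qed.

Lemma cd_le Z d x : (cd Z d x <= d)%N.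
Proof. elim: d => //= d IH; case: ifP => // _; exact: leqW IH. Qed.

Lemma cd_leP Z d x k : (k <= d)%N ->
  (cd Z d x <= k)%N = all (fun e => ~~ Zk Z (anc e x)) (iota k.+1 (d - k)).
Proof.
elim: d => [|d IH] kd.
  by rewrite leqn0 in kd; rewrite (eqP kd).
case: (ltngtP k d.+1) kd => // [lt _|-> _]; last by rewrite cd_le subnn.
rewrite subSn // -[(d - k).+1]addn1 iotaD all_cat /= addSn subnKC // andbT -IH //.
by case: ifP => //= _; rewrite ?andbT // andbF; apply/negbTE; rewrite -leqNgt -ltnS.
Qed.

Lemma cd_stop Z d x k : (k <= d)%N -> (cd Z d x <= k)%N -> cd Z d x = cd Z k x.
Proof.
elim: d => [|d IH] kd; first by rewrite leqn0 in kd; rewrite (eqP kd).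
case: (ltngtP k d.+1) kd => // [lt _|-> //] /=.
by case: ifP => _ h; [rewrite leqNgt lt in h | apply: IH].
Qed.

Lemma cd_same (Z : Zlab mu D) d (x y : leaf) : (d <= mxy x y)%N -> (d <= D)%N -> cd Z d x = cd Z d y.
Proof.
elim: d => //= d IH le dD.
have /eqP -> : anc d.+1 x == anc d.+1 y by rewrite anc_eq_mxy.
by rewrite IH // ltnW.
Qed.

Definition Sxy (x y : leaf) : seq key :=
  [seq anc e x | e <- iota (mxy x y).+1 (D - mxy x y)] ++
  [seq anc e y | e <- iota (mxy x y).+1 (D - mxy x y)].

Lemma chi_eq (Z : Zlab mu D) (x y : leaf) :
  (chi Z x == chi Z y) = all (fun k => ~~ Zk Z k) (Sxy x y).
Proof.
rewrite /Sxy all_cat !all_map -!cd_leP ?mxy_le // /chi !chi_dE.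
apply/eqP/andP => [E|[h1 h2]].
  have e12 := anc_inj _ _ _ _ (cd_le Z D x) (cd_le Z D y) E.
  rewrite -e12 in E *; rewrite -anc_eq_mxy ?E ?eqxx //; exact: cd_le.
rewrite (cd_stop _ _ _ _ (mxy_le x y) h1) (cd_stop _ _ _ _ (mxy_le x y) h2) (cd_same Z _ x y) ?mxy_le //.
apply/eqP; rewrite anc_eq_mxy; last by apply: leq_trans (mxy_le x y); apply: cd_le.
exact: cd_le.
Qed.

Lemma Sxy_uniq (x y : leaf) : uniq (Sxy x y).
Proof.
have memI e : e \in iota (mxy x y).+1 (D - mxy x y) -> (mxy x y < e <= D)%N.
  by rewrite mem_iota addSn subnKC ?mxy_le // ltnS.
rewrite /Sxy cat_uniq !map_inj_in_uniq ?iota_uniq ?andbT //=; first last.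
- move=> a b /memI/andP[_ aD] /memI/andP[_ bD] /=; exact: anc_inj.
- move=> a b /memI/andP[_ aD] /memI/andP[_ bD] /=; exact: anc_inj.
apply/hasPn => k /mapP[e /memI /andP[lt eD] ->]; apply/mapP => -[e' /memI /andP[_ eD'] E].
have ee := anc_inj _ _ _ _ eD eD' E; subst e'.
by move: lt; rewrite ltnNge -anc_eq_mxy // E eqxx.
Qed.

End Chi.
Arguments cd {mu D}. Arguments chi_dE {mu D}. Arguments Sxy {mu D}.
Arguments chi_eq {mu D}. Arguments Sxy_uniq {mu D}.

Section Prob.
Variables (R : realType) (mu D : nat).
Local Notation leaf := (leaf mu D).
Local Notation key := (key mu D).

Lemma Sxy_nonroot (x y : leaf) : all (@is_nonroot_node mu D) (Sxy x y).
Proof.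
rewrite /Sxy all_cat !all_map; apply/andP; split; apply/allP => e;
  rewrite mem_iota addSn subnKC ?mxy_le // ltnS => /andP[lt eD] /=;
  apply: is_nonroot_anc; rewrite eD andbT; exact: leq_ltn_trans lt.
Qed.

Lemma all_nat (T : Type) (a : pred T) s : (all a s)%:R = \prod_(t <- s) (a t)%:R :> R.
Proof.
elim: s => [|t s IH]; rewrite ?big_nil ?big_cons //= -IH.
by case: (a t); rewrite ?mul1r ?mul0r.
Qed.

Lemma Zk_val (Z : Zlab mu D) (u : nonroot mu D) : Zk Z (val u) = Z u.
Proof. by rewrite /Zk valK. Qed.

Lemma PZ_all (rho : nat -> R) (s : seq key) : uniq s -> all (@is_nonroot_node mu D) s ->
  \sum_(Z : Zlab mu D) PZ rho Z * (all (fun k => ~~ Zk Z k) s)%:R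
  = \prod_(k <- s) (1 - rho (key_depth k)).
Proof.
move=> us ns.
pose s' : seq (nonroot mu D) := pmap insub s.
have sE : s = map val s'.
  rewrite (pmap_filter (insubK _)); apply/esym/all_filterP.
  by rewrite (eq_all (isSome_insub _)).
rewrite sE map_inj_uniq in us; last exact: val_inj.
transitivity (\sum_(Z : Zlab mu D)
   (\prod_u (if Z u then rho (key_depth (val u)) else 1 - rho (key_depth (val u)))) *
   \prod_(u <- s') (~~ Z u)%:R).
  apply: eq_bigr => Z _; rewrite /PZ; congr (_ * _).
  by rewrite sE all_map all_nat; apply: eq_bigr => u _ /=; rewrite Zk_val.
by rewrite prod_bern // sE big_map.
Qed.

Lemma PZ_sum (rho : nat -> R) : \sum_(Z : Zlab mu D) PZ rho Z = 1.
Proof.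
by have := PZ_all rho [::] isT isT; rewrite big_nil => <-; apply: eq_bigr => Z _; rewrite mulr1.
Qed.

Lemma PW_sum (omega : R) : \sum_(W : Wild mu D) PW omega W = 1.
Proof.
have := @prod_bern R leaf (fun _ => omega) [::] isT.
by rewrite big_nil => <-; apply: eq_bigr => W _; rewrite big_nil mulr1.
Qed.

Lemma or_nat (a b : bool) : (a || b)%:R = 1 - (~~a)%:R * ((~~b)%:R * 1) :> R.
Proof. by case: a; case: b; rewrite /= ?mulr1n ?mulr0n ?mul0r ?mulr0 ?mul1r ?mulr1 ?subr0 ?subrr. Qed.

Lemma PW_or (omega : R) (x y : leaf) : x != y ->
  \sum_(W : Wild mu D) PW omega W * (W x || W y)%:R = omega * (2 - omega).
Proof.
move=> xy.
have := @prod_bern R leaf (fun _ => omega) [:: x; y].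
rewrite /= inE xy /= => /(_ isT); rewrite !big_cons big_nil => E.
transitivity (\sum_(W : Wild mu D) PW omega W - \sum_(W : Wild mu D)
   (\prod_t (if W t then omega else 1 - omega)) * \prod_(t <- [:: x; y]) (~~ W t)%:R).
  rewrite -sumrB; apply: eq_bigr => W _; rewrite /PW.
  rewrite !big_cons big_nil or_nat; ring.
by rewrite E PW_sum; ring.
Qed.

End Prob.

Section Weight.
Variables (R : realType) (mu D : nat) (nu : R) (q : nat -> R).
Local Notation leaf := (leaf mu D).
Local Notation key := (key mu D).
Hypothesis mu0 : (0 < mu)%N.
Hypothesis nu0 : nu != 0.

Lemma mu_neq0 : (mu%:R : R) != 0.
Proof. by rewrite pnatr_eq0 -lt0n. Qed.

Lemma F_anc j (x : leaf) : (j <= D)%N -> F nu j (anc j x) = nu * mu%:R ^+ (D - j).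
Proof.
move=> jD; rewrite /F.
transitivity (\sum_(y in [pred y : leaf | anc j y == anc j x]) nu); first by apply: eq_bigl.
by rewrite sumr_const card_anc // -natrX mulr_natr.
Qed.

Lemma F_root : F nu 0 (root_key mu D) = nu * mu%:R ^+ D.
Proof.
pose x0 : leaf := [ffun _ => Ordinal mu0].
by rewrite -(anc_root x0) F_anc // subn0.
Qed.

Lemma walkE d (v : key) (x : leaf) : (d <= D)%N ->
  walk nu d v x = (anc d x == v)%:R * (mu%:R ^+ (D - d))^-1.
Proof.
move=> dD; rewrite /walk; case: eqP => [_|_]; last by rewrite mul0r.
rewrite mul1r (eq_big_nat _ _ (F2 := fun _ => mu%:R^-1)) ?prodr_const_nat ?exprVn //.
move=> j /andP[dj jD]; rewrite !F_anc ?(ltnW jD) // -(subnSK jD) exprS.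
have := mu_neq0; have : (mu%:R : R) ^+ (D - j.+1) != 0 by rewrite expf_neq0 // mu_neq0.
move=> h1 h2; field.
by rewrite h1 h2 nu0.
Qed.

Lemma weightE (s : 'I_D) (v : key) (x y : leaf) :
  att_weight nu q (s, v, x, y) =
  q s.+1 * (mu%:R ^+ D)^-1 * (mu%:R ^+ s.+1)^-1 *
  (anc (D - s.+1) x == v)%:R * (anc (D - s.+1) y == v)%:R.
Proof.
have sD : (s.+1 <= D)%N := ltn_ord s.
rewrite /att_weight !walkE ?leq_subr // subKn //.
case ex: (anc (D - s.+1) x == v); last by rewrite !(mul0r, mulr0).
move/eqP: ex => <-; rewrite F_anc ?leq_subr // subKn // F_root.
have h1 : (mu%:R : R) ^+ s.+1 != 0 by rewrite expf_neq0 // mu_neq0.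
have h2 : (mu%:R : R) ^+ D != 0 by rewrite expf_neq0 // mu_neq0.
field.
by rewrite h1 h2 nu0.
Qed.

End Weight.

Lemma sum_pair (R : realType) (A B : finType) (G : A * B -> R) :
  \sum_(p : A * B) G p = \sum_a \sum_b G (a, b).
Proof. by rewrite pair_big /=; apply: eq_bigr => -[]. Qed.

Lemma sum_pair4 (R : realType) (A B C E : finType) (G : A * B * C * E -> R) :
  \sum_p G p = \sum_a \sum_b \sum_c \sum_e G (a, b, c, e).
Proof.
rewrite (@sum_pair R _ _ G) (@sum_pair R _ _ (fun i => \sum_e G (i, e))).
by rewrite (@sum_pair R _ _ (fun i => \sum_c \sum_e G (i, c, e))).
Qed.

Lemma sum_ind (R : realType) (T : finType) (k : T) (g : T -> R) :
  \sum_v (k == v)%:R * g v = g k.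
Proof.
rewrite (bigD1 k) //= eqxx mul1r big1 ?addr0 // => v; rewrite eq_sym => /negbTE ->.
by rewrite mul0r.
Qed.

Lemma sum_card (R : realType) (T : finType) (P : pred T) :
  \sum_y (P y)%:R = (#|P|)%:R :> R.
Proof.
rewrite -sum1_card natr_sum [RHS]big_mkcond /=; apply: eq_bigr => y _.
by rewrite unfold_in; case: (P y).
Qed.

Lemma sum_ord_ind (R : realType) n m (g : nat -> R) : (m <= n)%N ->
  \sum_(k < n.+1) (m == k)%:R * g k = g m.
Proof.
move=> mn; rewrite (bigD1 (Ordinal (mn : (m < n.+1)%N))) //= eqxx mul1r big1 ?addr0 //.
move=> k ne; suff -> : (m == k) = false by rewrite mul0r.
by apply: contraNF ne => /eqP e; apply/eqP/val_inj.
Qed.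

Section Main.
Variables (R : realType) (mu D : nat) (nu : R) (rho : nat -> R) (omega : R) (q : nat -> R).
Local Notation leaf := (leaf mu D).
Local Notation key := (key mu D).
Hypothesis mu0 : (0 < mu)%N.
Hypothesis nu0 : nu != 0.

Definition Gm (m : nat) : R := \prod_(m.+1 <= e < D.+1) (1 - rho e) ^+ 2.

Lemma prodS (x y : leaf) :
  \prod_(k <- Sxy x y) (1 - rho (key_depth k)) = Gm (mxy x y).
Proof.
rewrite /Sxy big_cat /= !big_map -big_split /Gm /index_iota subSS.
rewrite big_seq [RHS]big_seq; apply: eq_bigr => e.
rewrite mem_iota addSn subnKC ?mxy_le // ltnS => /andP[_ eD].
by rewrite !key_depth_anc // expr2.
Qed.

Lemma attempt_sum (Q : leaf -> leaf -> R) :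
  \sum_(a : attempt mu D) att_weight nu q a * Q a.1.2 a.2 =
  \sum_(s < D) q s.+1 * (mu%:R ^+ D)^-1 * (mu%:R ^+ s.+1)^-1 *
     \sum_x \sum_y (anc (D - s.+1) x == anc (D - s.+1) y)%:R * Q x y.
Proof.
rewrite sum_pair4; apply: eq_bigr => s _.
rewrite exchange_big mulr_sumr; apply: eq_bigr => x _.
rewrite exchange_big mulr_sumr; apply: eq_bigr => y _.
under eq_bigr => v _ do rewrite weightE //.
transitivity (\sum_v (anc (D - s.+1) x == v)%:R *
   (q s.+1 * (mu%:R ^+ D)^-1 * (mu%:R ^+ s.+1)^-1 * (anc (D - s.+1) y == v)%:R * Q x y)).
  by apply: eq_bigr => v _; ring.
by rewrite sum_ind eq_sym; ring.
Qed.


Lemma card_mxy (x : leaf) k : (k < D)%N ->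
  #|[pred y : leaf | mxy x y == k]| = (mu ^ (D - k) - mu ^ (D - k.+1))%N.
Proof.
move=> kD.
have cA : #|[pred y : leaf | (k <= mxy x y)%N]| = (mu ^ (D - k))%N.
  rewrite -(card_anc k x); last exact: ltnW.
  apply: eq_card => y; rewrite !inE eq_sym anc_eq_mxy //; exact: ltnW.
have cB : #|[pred y : leaf | (k.+1 <= mxy x y)%N]| = (mu ^ (D - k.+1))%N.
  rewrite -(card_anc k.+1 x); last exact: kD.
  apply: eq_card => y; rewrite !inE eq_sym anc_eq_mxy //.
have := cardID [pred y : leaf | (k.+1 <= mxy x y)%N] [pred y : leaf | (k <= mxy x y)%N].
rewrite cA -cB => <-.
rewrite (@eq_card _ [predI _ & _] [pred y : leaf | (k.+1 <= mxy x y)%N]); last first.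
  by move=> y; rewrite !inE; case: (ltngtP k (mxy x y)).
rewrite addKn; apply: eq_card => y; rewrite !inE.
by case: (ltngtP k (mxy x y)).
Qed.

Lemma card_mxy_R (x : leaf) k : (k < D)%N ->
  (#|[pred y : leaf | mxy x y == k]|)%:R = (mu%:R - 1) * mu%:R ^+ (D - k.+1) :> R.
Proof.
move=> kD; rewrite card_mxy // -(subnSK kD) expnS.
have -> : (mu * mu ^ (D - k.+1) - mu ^ (D - k.+1) = (mu - 1) * mu ^ (D - k.+1))%N.
  by rewrite mulnBl mul1n.
by rewrite natrM natrB // natrX.
Qed.

Lemma inner_sum (H : nat -> R) d (x : leaf) : (d <= D)%N ->
  \sum_y (anc d x == anc d y)%:R * ((x != y)%:R * H (mxy x y)) =
  \sum_(t < D - d) H (D - t.+1)%N * ((mu%:R - 1) * mu%:R ^+ t).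
Proof.
move=> dD.
transitivity (\sum_y \sum_(k < D.+1) (mxy x y == k)%:R *
   ((d <= k)%:R * ((k < D)%:R * H k))).
  apply: eq_bigr => y _; rewrite (@sum_ord_ind R D (mxy x y) (fun k => (d <= k)%:R * ((k < D)%:R * H k))); last exact: mxy_le.
  by rewrite anc_eq_mxy // mxy_ltD.
rewrite exchange_big /=.
transitivity (\sum_(k < D.+1) (d <= k)%:R * ((k < D)%:R * H k) *
   (#|[pred y : leaf | mxy x y == k]|)%:R).
  apply: eq_bigr => k _; rewrite -sum_card mulr_sumr; apply: eq_bigr => y _.
  by rewrite mulrC.
rewrite big_ord_recr /= ltnn mulr0n !(mul0r, mulr0) addr0.
transitivity (\sum_(k < D | (d <= k)%N) H k * ((mu%:R - 1) * mu%:R ^+ (D - k.+1))).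
  rewrite [RHS]big_mkcond /=; apply: eq_bigr => k _; rewrite ltn_ord card_mxy_R //.
  by case: (d <= k)%N; rewrite /= ?mul1r ?mul0r.
rewrite -(big_mkord (fun k => (d <= k)%N) (fun k => H k * ((mu%:R - 1) * mu%:R ^+ (D - k.+1)))).
rewrite big_rev_mkord subn0 (big_ord_widen D (fun t => H (D - t.+1)%N * ((mu%:R - 1) * mu%:R ^+ t))) ?leq_subr //.
apply: eq_big => t.
  by apply/idP/idP; have := ltn_ord t; lia.
move=> _; congr (_ * (_ * _ ^+ _)); have := ltn_ord t; lia.
Qed.

Lemma card_leaf : #|{: leaf}| = (mu ^ D)%N.
Proof. by rewrite card_ffun !card_ord. Qed.

Lemma sum_const_leaf (c : R) : \sum_(x : leaf) c = mu%:R ^+ D * c.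
Proof. by rewrite sumr_const card_leaf -natrX mulr_natl. Qed.

Lemma pE_formula (H : nat -> R) (Q : leaf -> leaf -> R) :
  (forall x y, Q x y = (x != y)%:R * H (mxy x y)) ->
  \sum_(a : attempt mu D) att_weight nu q a * Q a.1.2 a.2 =
  \sum_(s < D) q s.+1 * (mu%:R ^+ s.+1)^-1 *
     \sum_(t < s.+1) H (D - t.+1)%N * ((mu%:R - 1) * mu%:R ^+ t).
Proof.
move=> HQ; rewrite attempt_sum; apply: eq_bigr => s _.
have sD : (s.+1 <= D)%N := ltn_ord s.
under eq_bigr => x _ do under eq_bigr => y _ do rewrite HQ.
under eq_bigr => x _ do rewrite inner_sum ?leq_subr // subKn //.
rewrite sum_const_leaf.
have h2 : (mu%:R : R) ^+ D != 0 by rewrite expf_neq0 // mu_neq0.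
have h1 : (mu%:R : R) ^+ s.+1 != 0 by rewrite expf_neq0 // mu_neq0.
set S := \sum_(t < s.+1) _. field. by rewrite h1 h2.
Qed.

Lemma w_sum : \sum_(s < D) q s.+1 = 1 ->
  \sum_(a : attempt mu D) att_weight nu q a = 1.
Proof.
move=> q1.
transitivity (\sum_(a : attempt mu D) att_weight nu q a * (fun _ _ => 1) a.1.2 a.2).
  by apply: eq_bigr => a _; rewrite mulr1.
rewrite (attempt_sum (fun _ _ => 1)); rewrite -[RHS]q1; apply: eq_bigr => s _.
have sD : (s.+1 <= D)%N := ltn_ord s.
have cx (x : leaf) : \sum_y (anc (D - s.+1) x == anc (D - s.+1) y)%:R * 1 = mu%:R ^+ s.+1 :> R.
  rewrite (eq_bigr (fun y => (anc (D - s.+1) y == anc (D - s.+1) x)%:R)); last first.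
    by move=> y _; rewrite mulr1 eq_sym.
  by rewrite (@sum_card R leaf) card_anc ?leq_subr // subKn // natrX.
under eq_bigr => x _ do rewrite cx.
rewrite sum_const_leaf.
have h1 : (mu%:R : R) ^+ s.+1 != 0 by rewrite expf_neq0 // mu_neq0.
have h2 : (mu%:R : R) ^+ D != 0 by rewrite expf_neq0 // mu_neq0.
field. by rewrite h1 h2.
Qed.

End Main.

Lemma natr_andb (R : realType) (a b : bool) : (a && b)%:R = a%:R * b%:R :> R.
Proof. by case: a; case: b; rewrite /= ?mulr1n ?mulr0n ?mul1r ?mul0r. Qed.

Lemma natr_negb (R : realType) (a : bool) : (~~ a)%:R = 1 - a%:R :> R.
Proof. by case: a; rewrite /= ?mulr1n ?mulr0n ?subrr ?subr0. Qed.

Section Final.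
Variables (R : realType) (mu D : nat) (nu : R) (rho : nat -> R) (omega : R) (q : nat -> R).
Local Notation leaf := (leaf mu D).
Local Notation key := (key mu D).

Lemma sum_ZW (f : Zlab mu D -> R) (g : Wild mu D -> R) :
  \sum_(Z : Zlab mu D) \sum_(W : Wild mu D) PZ rho Z * PW omega W * (f Z * g W) =
  (\sum_(Z : Zlab mu D) PZ rho Z * f Z) * (\sum_(W : Wild mu D) PW omega W * g W).
Proof.
rewrite big_distrl; apply: eq_bigr => Z _; rewrite big_distrr; apply: eq_bigr => W _.
rewrite /=; ring.
Qed.

Lemma Q_agree (a : attempt mu D) :
  \sum_(Z : Zlab mu D) \sum_(W : Wild mu D) PZ rho Z * PW omega W * (agreement Z W a)%:R =
  (a.1.2 != a.2)%:R * @Gm R D rho (mxy a.1.2 a.2).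
Proof.
case: a => [[[s v] x] y] /=.
case: (eqVneq x y) => [<-|xy] /=.
  rewrite mul0r; apply: big1 => Z _; apply: big1 => W _.
  by rewrite ?eqxx /= ?mulr0n ?mulr0.
transitivity (\sum_(Z : Zlab mu D) \sum_(W : Wild mu D) PZ rho Z * PW omega W *
   ((all (fun k => ~~ Zk Z k) (Sxy x y))%:R * 1)).
  apply: eq_bigr => Z _; apply: eq_bigr => W _.
  by rewrite /= chi_eq mulr1.
rewrite sum_ZW.
under [X in _ * X]eq_bigr => W _ do rewrite mulr1.
rewrite PW_sum mulr1 PZ_all ?Sxy_uniq ?Sxy_nonroot // prodS mul1r.
by [].
Qed.

Lemma Q_conf (a : attempt mu D) :
  \sum_(Z : Zlab mu D) \sum_(W : Wild mu D) PZ rho Z * PW omega W * (conflict Z W a)%:R =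
  (a.1.2 != a.2)%:R * ((1 - @Gm R D rho (mxy a.1.2 a.2)) * (omega * (2 - omega))).
Proof.
case: a => [[[s v] x] y] /=.
case: (eqVneq x y) => [<-|xy] /=.
  rewrite mul0r; apply: big1 => Z _; apply: big1 => W _.
  by rewrite ?eqxx /= ?mulr0n ?mulr0.
transitivity (\sum_(Z : Zlab mu D) \sum_(W : Wild mu D) PZ rho Z * PW omega W *
   ((1 - (all (fun k => ~~ Zk Z k) (Sxy x y))%:R) * (W x || W y)%:R)).
  apply: eq_bigr => Z _; apply: eq_bigr => W _.
  by rewrite natr_andb natr_negb chi_eq.
rewrite sum_ZW PW_or // mul1r; congr (_ * _).
under eq_bigr => Z _ do rewrite mulrBr mulr1.
rewrite sumrB PZ_sum PZ_all ?Sxy_uniq ?Sxy_nonroot // prodS.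
by [].
Qed.

Lemma EC (E : Zlab mu D -> Wild mu D -> attempt mu D -> bool) n :
  \sum_(a : attempt mu D) att_weight nu q a = 1 ->
  expected_count nu rho omega q E n =
  n%:R * \sum_(a : attempt mu D) att_weight nu q a *
     (\sum_(Z : Zlab mu D) \sum_(W : Wild mu D) PZ rho Z * PW omega W * (E Z W a)%:R).
Proof.
move=> w1; rewrite /expected_count.
transitivity (\sum_(Z : Zlab mu D) \sum_(W : Wild mu D) PZ rho Z * PW omega W *
   (n%:R * \sum_(a : attempt mu D) att_weight nu q a * (E Z W a)%:R)).
  apply: eq_bigr => Z _; apply: eq_bigr => W _.
  rewrite -tuple_count // mulr_sumr; apply: eq_bigr => t _; ring.
under eq_bigr => Z _ do under eq_bigr => W _ do rewrite mulr_sumr mulr_sumr.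
rewrite mulr_sumr.
under eq_bigr => Z _ do rewrite exchange_big /=.
rewrite exchange_big /=; apply: eq_bigr => a _.
rewrite mulr_sumr mulr_sumr; apply: eq_bigr => Z _.
rewrite mulr_sumr mulr_sumr; apply: eq_bigr => W _.
ring.
Qed.

End Final.

Lemma key_lemma (R : realType) (mu D : nat) (nu omega : R) (rho q pN : nat -> R)
  (E : Zlab mu D -> Wild mu D -> attempt mu D -> bool) (H B : nat -> R) :
  (0 < mu)%N -> nu != 0 -> \sum_(1 <= s < D.+1) q s = 1 ->
  series (fun n => n%:R * pN n) @ \oo --> (nu * mu%:R ^+ D / 2 : R) ->
  (forall a, \sum_(Z : Zlab mu D) \sum_(W : Wild mu D) PZ rho Z * PW omega W * (E Z W a)%:R =
     (a.1.2 != a.2)%:R * H (mxy a.1.2 a.2)) ->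
  (forall t, (t < D)%N -> H (D - t.+1)%N = B t) ->
  series (fun n => pN n * expected_count nu rho omega q E n) @ \oo -->
    nu * mu%:R ^+ D * (mu%:R - 1) / 2 * \sum_(1 <= s < D.+1) (q s * mu%:R ^- s *
                               \sum_(0 <= t < s) B t * mu%:R ^+ t).
Proof.
move=> mu0 nu0 q1 cvgN HQ Hs.
have q1' : \sum_(s < D) q s.+1 = 1 by move: q1; rewrite big_add1 /= big_mkord.
have w1 := @w_sum R mu D nu q mu0 nu0 q1'.
set p := \sum_(a : attempt mu D) att_weight nu q a *
     (\sum_(Z : Zlab mu D) \sum_(W : Wild mu D) PZ rho Z * PW omega W * (E Z W a)%:R).
have pE : p = \sum_(s < D) q s.+1 * (mu%:R ^+ s.+1)^-1 *
     \sum_(t < s.+1) H (D - t.+1)%N * ((mu%:R - 1) * mu%:R ^+ t).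
  rewrite -(@pE_formula R mu D nu q mu0 nu0 H (fun x y => (x != y)%:R * H (mxy x y))) //.
  by apply: eq_bigr => a _; rewrite HQ.
have -> : series (fun n => pN n * expected_count nu rho omega q E n) =
          (fun N => p * series (fun n => n%:R * pN n) N).
  apply/funext => N; rewrite /series /= mulr_sumr; apply: eq_bigr => n _.
  rewrite EC //; rewrite -/p; ring.
have -> : nu * mu%:R ^+ D * (mu%:R - 1) / 2 * \sum_(1 <= s < D.+1) (q s * mu%:R ^- s *
            \sum_(0 <= t < s) B t * mu%:R ^+ t) = p * (nu * mu%:R ^+ D / 2).
  rewrite pE big_add1 /= big_mkord mulr_sumr big_distrl; apply: eq_bigr => s _ /=.
  have sD : (s < D)%N := ltn_ord s.
  have inner : \sum_(t < s.+1) H (D - t.+1)%N * ((mu%:R - 1) * mu%:R ^+ t) =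
      (mu%:R - 1) * \sum_(t < s.+1) B t * mu%:R ^+ t.
    rewrite mulr_sumr; apply: eq_bigr => t _; rewrite Hs; first by ring.
    exact: leq_trans (ltn_ord t) sD.
  rewrite big_mkord inner; ring.
exact: cvgMr cvgN.
Qed.

Theorem corollary6p6 (R : realType) (mu D : nat) (nu omega : R)
    (rho q pN : nat -> R) :
  (2 <= mu)%N -> (1 <= D)%N -> 0 < nu ->
  (forall d, (1 <= d <= D)%N -> 0 <= rho d <= 1) ->
  0 <= omega <= 1 ->
  (forall s, (1 <= s <= D)%N -> 0 <= q s) ->
  \sum_(1 <= s < D.+1) q s = 1 ->
  (forall n, 0 <= pN n) ->
  series pN @ \oo --> (1 : R) ->
  series (fun n => n%:R * pN n) @ \oo --> (nu * mu%:R ^+ D / 2 : R) ->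
  let A t := \prod_(D - t <= d < D.+1) (1 - rho d) ^+ 2 in
  let C t := (1 - A t) * (omega * (2 - omega)) in
  let K := nu * mu%:R ^+ D * (mu%:R - 1) / 2 in
  series (fun n => pN n *
            expected_count nu rho omega q (@agreement mu D) n) @ \oo -->
    K * \sum_(1 <= s < D.+1) (q s * mu%:R ^- s *
                               \sum_(0 <= t < s) A t * mu%:R ^+ t)
  /\
  series (fun n => pN n *
            expected_count nu rho omega q (@conflict mu D) n) @ \oo -->
    K * \sum_(1 <= s < D.+1) (q s * mu%:R ^- s *
                               \sum_(0 <= t < s) C t * mu%:R ^+ t).
Proof.
move=> mu2 D1 nu_gt0 rhoP omP qP q1 pN0 cvg1 cvgN A C K.
have mu0 : (0 < mu)%N by apply: leq_trans mu2.
have nu0 : nu != 0 by rewrite gt_eqF.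
have HA : forall t, (t < D)%N -> @Gm R D rho (D - t.+1)%N = A t.
  by move=> t tD; rewrite /Gm /A subnSK.
split.
  apply: (@key_lemma R mu D nu omega rho q pN _ (@Gm R D rho)) => //.
  exact: Q_agree.
apply: (@key_lemma R mu D nu omega rho q pN _ (fun m => (1 - @Gm R D rho m) * (omega * (2 - omega)))) => //.
  exact: Q_conf.
by move=> t tD; rewrite /C HA.
Qed.
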